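(* Let $(A_1,X_1)$ and $(A_2,X_2)$ be two graphs (with $n_1$ and $n_2$ nodes) that cannot be distinguished by the 1-WL algorithm. Consider a DiffPool pooling layer with $c$ clusters, $S = \mathrm{gnn}_c(A,X)\in\mathbb{R}^{n\times c}$, $H=\mathrm{gnn}_r(A,X)$, where $\mathrm{gnn}_c$ and $\mathrm{gnn}_r$ are 1-WL-bounded GNNs, and whose outputs are the coarsened adjacency matrix $S^\top A S$ and the pooled features $S^\top H$ (the paper writes the layer output as $H' = S^\top A S\, S^\top H$). Then $S_1^\top A_1 S_1 = S_2^\top A_2 S_2$ and $S_1^\top H_1 = S_2^\top H_2$ (hence also $S_1^\top A_1 S_1 S_1^\top H_1 = S_2^\top A_2 S_2 S_2^\top H_2$). Consequently, any DiffPool network consisting of such pooling layers (with intermediate GNN layers) followed by a permutation-invariant readout computes the same vector representation for the two graphs.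
   Context: A graph with $n$ nodes is given by an adjacency matrix $A\in\{0,1\}^{n\times n}$ (symmetric) and node features $X\in\mathbb{R}^{n\times d}$. The 1-WL (color refinement) algorithm starts from initial colors given by node features and iteratively recolors each node by the pair (its current color, multiset of current colors of its neighbors) until the partition is stable. Two graphs ''cannot be distinguished by the 1-WL algorithm'' means: running 1-WL on their disjoint union, every stable color class contains the same number of nodes from each graph. A node-level map $f$, $(A,X)\mapsto f(A,X)\in\mathbb{R}^{n\times d'}$, is called 1-WL-bounded if the representation it assigns to a node depends only on the node's stable 1-WL color (computed on the disjoint union of any graphs under consideration); standard message-passing GNNs (e.g. GIN, GCN) are of this type, and row-wise functions such as a row-wise softmax of such outputs remain of this type. *)

(* Defs.v *)
From HB Require Import structures.
From mathcomp Require Import all_boot all_order all_algebra.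
From mathcomp Require Import boolp reals.
Set Implicit Arguments. Unset Strict Implicit. Unset Printing Implicit Defensive.
Import Order.TTheory GRing.Theory Num.Theory.
Local Open Scope ring_scope.

Section WL.
Variable R : realType.

Definition is_adj (n : nat) (A : 'M[R]_n) : Prop :=
  forall i j : 'I_n, A i j = A j i /\ (A i j = 0 \/ A i j = 1).

(* wl A X k u v : nodes u and v have the same color after k rounds of 1-WL
   (color refinement) started from the node features X.  Colors are
   represented by the induced equivalence relation.  Round k+1: same color at
   round k, and for every round-k color class (represented by w) u and v have
   the same number of neighbours in that class (= equal multisets of
   neighbour colors). *)
Fixpoint wl (n d : nat) (A : 'M[R]_n) (X : 'M[R]_(n, d)) (k : nat)
  (u v : 'I_n) {struct k} : bool :=
  match k with
  | 0 => row u X == row v X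
  | k'.+1 => wl A X k' u v &&
      [forall w : 'I_n,
         #|[set x : 'I_n | (A u x == 1) && wl A X k' x w]|
         == #|[set x : 'I_n | (A v x == 1) && wl A X k' x w]|]
  end.

(* Same stable 1-WL color: same color at every round (the refinement is
   decreasing and stabilizes, so this is the stable partition). *)
Definition wl_stable (n d : nat) (A : 'M[R]_n) (X : 'M[R]_(n, d)) (u v : 'I_n)
  : Prop := forall k, wl A X k u v.

Definition union_adj n1 n2 (A1 : 'M[R]_n1) (A2 : 'M[R]_n2) : 'M[R]_(n1 + n2) :=
  block_mx A1 0 0 A2.
Definition union_feat n1 n2 d (X1 : 'M[R]_(n1, d)) (X2 : 'M[R]_(n2, d))
  : 'M[R]_(n1 + n2, d) := col_mx X1 X2.

(* The two graphs cannot be distinguished by 1-WL: every stable color class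
   of the disjoint union contains equally many nodes of each graph. *)
Definition wl_indist n1 n2 d (A1 : 'M[R]_n1) (X1 : 'M[R]_(n1, d))
  (A2 : 'M[R]_n2) (X2 : 'M[R]_(n2, d)) : Prop :=
  forall u : 'I_(n1 + n2),
    #|[set i : 'I_n1 | `[< wl_stable (union_adj A1 A2) (union_feat X1 X2)
                                      (lshift n2 i) u >]]|
    = #|[set j : 'I_n2 | `[< wl_stable (union_adj A1 A2) (union_feat X1 X2)
                                      (rshift n1 j) u >]]|.

Definition wl_bounded d d' (f : forall n, 'M[R]_n -> 'M[R]_(n, d) -> 'M[R]_(n, d'))
  : Prop :=
  forall n1 n2 (A1 : 'M[R]_n1) (X1 : 'M[R]_(n1, d)) (A2 : 'M[R]_n2)
         (X2 : 'M[R]_(n2, d)),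
    is_adj A1 -> is_adj A2 ->
    forall u v : 'I_(n1 + n2),
      wl_stable (union_adj A1 A2) (union_feat X1 X2) u v ->
      row u (col_mx (f n1 A1 X1) (f n2 A2 X2))
      = row v (col_mx (f n1 A1 X1) (f n2 A2 X2)).

End WL.

(* Main.v *)
Require Import Defs.
From HB Require Import structures.
From mathcomp Require Import all_boot all_order all_algebra.
From mathcomp Require Import boolp reals.
From mathcomp Require Import zify.
Import Order.TTheory GRing.Theory Num.Theory.
Local Open Scope ring_scope.
Set Implicit Arguments. Unset Strict Implicit.

Section Aux.
Variable R : realType.

Lemma wl_refl n d (A : 'M[R]_n) (X : 'M[R]_(n, d)) k u : wl A X k u u.
Proof.
elim: k => [|k IH] /=; first by rewrite eqxx.
rewrite IH /=; apply/forallP => w; by rewrite eqxx.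
Qed.

Lemma wl_sym n d (A : 'M[R]_n) (X : 'M[R]_(n, d)) k u v :
  wl A X k u v = wl A X k v u.
Proof.
elim: k u v => [|k IH] u v /=; first by rewrite eq_sym.
rewrite IH; congr (_ && _); apply/forallP/forallP => H w; rewrite eq_sym; exact: H.
Qed.

Lemma wl_trans n d (A : 'M[R]_n) (X : 'M[R]_(n, d)) k u v w :
  wl A X k u v -> wl A X k v w -> wl A X k u w.
Proof.
elim: k u v w => [|k IH] u v w /=; first by move/eqP->.
move=> /andP[h1 /forallP h2] /andP[h3 /forallP h4].
rewrite (IH _ _ _ h1 h3) /=; apply/forallP => z; by rewrite (eqP (h2 z)) h4.
Qed.

Lemma wl_le n d (A : 'M[R]_n) (X : 'M[R]_(n, d)) m k u v :
  (m <= k)%N -> wl A X k u v -> wl A X m u v.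
Proof.
move=> /subnKC <-; elim: (k - m)%N => [|p IH]; first by rewrite addn0.
by rewrite addnS => /andP[/IH].
Qed.

Lemma wl_ext n d (A : 'M[R]_n) (X : 'M[R]_(n, d)) k k' :
  (forall u v, wl A X k u v = wl A X k' u v) ->
  forall u v, wl A X k.+1 u v = wl A X k'.+1 u v.
Proof.
move=> h u v /=; rewrite h; congr (_ && _); apply: eq_forallb => w.
congr (_ == _); apply: eq_card => x; by rewrite !inE h.
Qed.


Lemma wl_stabilizes n d (A : 'M[R]_n) (X : 'M[R]_(n, d)) :
  exists K, forall u v, `[< wl_stable A X u v >] = wl A X K u v
                        /\ wl A X K.+1 u v = wl A X K u v.
Proof.
pose P k := [set p : 'I_n * 'I_n | wl A X k p.1 p.2].
have Psub k : P k.+1 \subset P k.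
  by apply/subsetP => p; rewrite !inE => /andP[].
have key k : (exists2 k', (k' <= k)%N & P k'.+1 = P k') \/ (#|P k| + k <= #|P 0%N|)%N.
  elim: k => [|k [[k' h1 h2]|IH]]; first by right; rewrite addn0.
  - by left; exists k' => //; apply: leqW.
  - case: (eqVneq #|P k.+1| #|P k|) => e.
      left; exists k => //; apply/eqP; rewrite eqEcard Psub e leqnn //.
    right; have := subset_leq_card (Psub k).
    rewrite leq_eqVlt (negbTE e) /= => lt.
    move: IH lt; set a := #|P k.+1|; set b := #|P k|; set z := #|P 0%N|; move=> IH lt.
    lia.
case: (key (#|P 0%N|).+1) => [[K _ hK]|]; last by lia.
have hKs u v : wl A X K.+1 u v = wl A X K u v.
  by move/setP: hK => /(_ (u, v)); rewrite !inE.
have hKm m u v : wl A X (K + m) u v = wl A X K u v.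
  elim: m u v => [|m IH] u v; first by rewrite addn0.
  by rewrite addnS (wl_ext IH) hKs.
exists K => u v; split => //.
apply/idP/idP => [/asboolP h|h]; first exact: h.
apply/asboolP => m; case: (leqP m K) => hm; first exact: wl_le hm h.
by rewrite -(subnKC (ltnW hm)) hKm.
Qed.

Lemma sum_card (I : finType) (P : pred I) :
  \sum_i ((P i)%:R : R) = #|[set i | P i]|%:R.
Proof.
rewrite -natr_sum; congr _%:R; rewrite -sum1_card [RHS]big_mkcond /=.
apply: eq_bigr => i _; rewrite !inE; by case: (P i).
Qed.

Lemma class_sum (I : finType) (E : rel I) (f : I -> R) :
 (forall x, E x x) -> (forall x y, E x y -> E y x) ->
 (forall x y z, E x y -> E y z -> E x z) ->
 (forall x y, E x y -> f x = f y) ->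
 forall x, f x = \sum_w (E x w)%:R * (f w / #|[set y | E y w]|%:R).
Proof.
move=> Er Es Et Ef x.
have cE : forall w, E x w -> #|[set y | E y w]| = #|[set y | E y x]|.
  move=> w h; apply: eq_card => y; rewrite !inE; apply/idP/idP => hy.
    exact: Et hy (Es _ _ h).
  exact: Et hy h.
have cpos : (0 < #|[set y | E y x]|)%N.
  rewrite card_gt0; apply/set0Pn; exists x; by rewrite inE.
rewrite (eq_bigr (fun w => (E x w)%:R * (f x / #|[set y | E y x]|%:R))); last first.
  move=> w _; case h: (E x w); last by rewrite !mul0r.
  by rewrite -(Ef _ _ h) (cE _ h).
rewrite -big_distrl /=.
have -> : \sum_w ((E x w)%:R : R) = #|[set y | E y x]|%:R.
  rewrite sum_card; congr _%:R; apply: eq_card => y; rewrite !inE.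
  by apply/idP/idP => /Es.
rewrite mulrCA mulfV ?mulr1 // pnatr_eq0 -lt0n //.
Qed.


Lemma nbr_inv n d (A : 'M[R]_n) (X : 'M[R]_(n, d)) (T : 'I_n -> R) :
  (forall u v, `[< wl_stable A X u v >] -> T u = T v) ->
  forall u v, wl_stable A X u v ->
   \sum_x (A u x == 1)%:R * T x = \sum_x (A v x == 1)%:R * T x.
Proof.
move=> hT u v huv.
have [K hK] := wl_stabilizes A X.
pose E := fun x y => `[< wl_stable A X x y >].
have Er : forall x, E x x by move=> x; apply/asboolP => k; exact: wl_refl.
have Es : forall x y, E x y -> E y x.
  by move=> x y /asboolP h; apply/asboolP => k; rewrite wl_sym.
have Et : forall x y z, E x y -> E y z -> E x z.
  move=> x y z /asboolP h1 /asboolP h2; apply/asboolP => k; exact: wl_trans (h1 k) (h2 k).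
have expand a : \sum_x (A a x == 1)%:R * T x =
   \sum_w #|[set x | (A a x == 1) && wl A X K x w]|%:R * (T w / #|[set y | E y w]|%:R).
  under eq_bigr => x _ do rewrite (class_sum Er Es Et hT x) big_distrr /=.
  rewrite exchange_big /=; apply: eq_bigr => w _.
  rewrite -(sum_card (fun x => (A a x == 1) && wl A X K x w)) big_distrl /=; apply: eq_bigr => x _.
  by rewrite /E mulrA -natrM mulnb (proj1 (hK x w)).
rewrite !expand; apply: eq_bigr => w _.
have := huv K.+1 => /= /andP[_ /forallP h].
by rewrite (eqP (h w)).
Qed.

Lemma adj01 (x : R) : x = 0 \/ x = 1 -> (x == 1)%:R = x.
Proof. by case => ->; rewrite ?eqxx // eq_sym oner_eq0. Qed.

End Aux.

Theorem theorem1 (R : realType) (d c d' : nat)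
  (gnn_c : forall n, 'M[R]_n -> 'M[R]_(n, d) -> 'M[R]_(n, c))
  (gnn_r : forall n, 'M[R]_n -> 'M[R]_(n, d) -> 'M[R]_(n, d'))
  (n1 n2 : nat) (A1 : 'M[R]_n1) (X1 : 'M[R]_(n1, d))
  (A2 : 'M[R]_n2) (X2 : 'M[R]_(n2, d)) :
  is_adj A1 -> is_adj A2 ->
  wl_indist A1 X1 A2 X2 ->
  wl_bounded gnn_c -> wl_bounded gnn_r ->
  let S1 := gnn_c n1 A1 X1 in let H1 := gnn_r n1 A1 X1 in
  let S2 := gnn_c n2 A2 X2 in let H2 := gnn_r n2 A2 X2 in
  [/\ S1^T *m A1 *m S1 = S2^T *m A2 *m S2,
      S1^T *m H1 = S2^T *m H2,
      S1^T *m A1 *m S1 *m (S1^T *m H1) = S2^T *m A2 *m S2 *m (S2^T *m H2)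
    & forall (m : nat) (net : 'M[R]_c -> 'M[R]_(c, d') -> 'rV[R]_m),
        net (S1^T *m A1 *m S1) (S1^T *m H1)
        = net (S2^T *m A2 *m S2) (S2^T *m H2)].
Proof.
move=> hA1 hA2 hind hbc hbr S1 H1 S2 H2.
pose E := fun u v => `[< wl_stable (union_adj A1 A2) (union_feat X1 X2) u v >].
have Er : forall x, E x x by move=> x; apply/asboolP => k; exact: wl_refl.
have Es : forall x y, E x y -> E y x.
  by move=> x y /asboolP h; apply/asboolP => k; rewrite wl_sym.
have Et : forall x y z, E x y -> E y z -> E x z.
  move=> x y z /asboolP h1 /asboolP h2; apply/asboolP => k; exact: wl_trans (h1 k) (h2 k).
have split3 : forall F : 'I_(n1 + n2) -> R, (forall x y, E x y -> F x = F y) ->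
    \sum_i F (lshift n2 i) = \sum_j F (rshift n1 j).
  move=> F hF.
  under eq_bigr => i _ do rewrite (class_sum Er Es Et hF).
  under [RHS]eq_bigr => i _ do rewrite (class_sum Er Es Et hF).
  rewrite exchange_big [RHS]exchange_big /=; apply: eq_bigr => w _.
  rewrite -!big_distrl /= !sum_card; congr (_%:R * _).
  exact: hind w.
pose T := col_mx S1 S2. pose G := col_mx H1 H2.
have hT : forall a x y, E x y -> T x a = T y a.
  move=> a x y /asboolP h.
  have := congr1 (fun r : 'rV[R]_c => r 0 a) (hbc n1 n2 A1 X1 A2 X2 hA1 hA2 x y h).
  by rewrite !mxE.
have hG : forall a x y, E x y -> G x a = G y a.
  move=> a x y /asboolP h.
  have := congr1 (fun r : 'rV[R]_d' => r 0 a) (hbr n1 n2 A1 X1 A2 X2 hA1 hA2 x y h).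
  by rewrite !mxE.
have eq1 : S1^T *m A1 *m S1 = S2^T *m A2 *m S2.
  apply/matrixP => a b; rewrite -!mulmxA !mxE.
  pose g u := \sum_x (union_adj A1 A2 u x == 1)%:R * T x b.
  have hg : forall x y, E x y -> g x = g y.
    move=> x y /asboolP h; apply: nbr_inv h => u v; exact: hT.
  have gl i : g (lshift n2 i) = \sum_j A1 i j * S1 j b.
    rewrite /g /T /union_adj big_split_ord /=.
    under eq_bigr => j _ do rewrite block_mxEul col_mxEu (adj01 (hA1 i j).2).
    by rewrite [X in _ + X]big1 ?addr0 // => j _; rewrite block_mxEur mxE eq_sym oner_eq0 mul0r.
  have gr i : g (rshift n1 i) = \sum_j A2 i j * S2 j b.
    rewrite /g /T /union_adj big_split_ord /=.
    under [X in _ + X]eq_bigr => j _ do rewrite block_mxEdr col_mxEd (adj01 (hA2 i j).2).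
    by rewrite [X in X + _]big1 ?add0r // => j _; rewrite block_mxEdl mxE eq_sym oner_eq0 mul0r.
  have hF : forall x y, E x y -> T x a * g x = T y a * g y.
    by move=> x y h; rewrite (hT a x y h) (hg x y h).
  have := split3 (fun u => T u a * g u) hF.
  rewrite /= => e.
  transitivity (\sum_i T (lshift n2 i) a * g (lshift n2 i)).
    by apply: eq_bigr => i _; rewrite gl /T col_mxEu !mxE.
  rewrite e; apply: eq_bigr => i _; by rewrite gr /T col_mxEd !mxE.
have eq2 : S1^T *m H1 = S2^T *m H2.
  apply/matrixP => a b; rewrite !mxE.
  have hF : forall x y, E x y -> T x a * G x b = T y a * G y b.
    by move=> x y h; rewrite (hT a x y h) (hG b x y h).
  have := split3 (fun u => T u a * G u b) hF.
  rewrite /= => e.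
  transitivity (\sum_i T (lshift n2 i) a * G (lshift n2 i) b).
    by apply: eq_bigr => i _; rewrite /T /G !col_mxEu mxE.
  rewrite e; apply: eq_bigr => i _; by rewrite /T /G !col_mxEd mxE.
by split => //; [rewrite eq1 eq2 | move=> m net; rewrite eq1 eq2].
Qed.
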